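(* Let $\mathbb{K}$ be a field, let $P_1, P_2 \in \mathbb{K}[X]$ be irreducible polynomials with $P_1' \neq 0$ and $P_2' \neq 0$, and let $k \geq 1$ be an integer. Then $\mathbb{K}[X]/(P_1^k)$ and $\mathbb{K}[X]/(P_2^k)$ are isomorphic as $\mathbb{K}$-algebras if and only if $\mathbb{K}[X]/(P_1)$ and $\mathbb{K}[X]/(P_2)$ are isomorphic as $\mathbb{K}$-algebras.
   Context: $\mathbb{K}$ is an arbitrary field; $P'$ denotes the formal derivative (for irreducible $P$, $P'\neq0$ means $P$ is separable). *)

(* Defs.v *)
From HB Require Import structures.
From mathcomp Require Import all_boot all_order all_algebra.
Set Implicit Arguments. Unset Strict Implicit. Unset Printing Implicit Defensive.
Import GRing.Theory.
Local Open Scope ring_scope.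

(* K[X]/(p), for p a nonzero polynomial: the ideal (p) equals the ideal
   generated by the monic associate (lead_coef p)^-1 *: p, and MathComp's
   qpoly {poly %/ q} is K[X]/(q) for q monic of size > 1. *)
Definition quot_alg (K : fieldType) (p : {poly K}) : Type :=
  {poly %/ ((lead_coef p)^-1 *: p)}.

Definition kalg_iso (K : fieldType) (A B : lalgType K) : Prop :=
  exists f : {lrmorphism A -> B}, bijective f.

(* Main.v *)
Require Import Defs.
From HB Require Import structures.
From mathcomp Require Import all_boot all_order all_algebra.
From mathcomp Require Import ring.
Import GRing.Theory.
Local Open Scope ring_scope.


Section Lin.
Set Implicit Arguments. Unset Strict Implicit.
Variable K : fieldType.
Variables vT wT : vectType K.

Lemma lin_inj_dim (f : {linear vT -> wT}) : injective f ->
  (\dim {:vT} <= \dim {:wT})%N.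
Proof.
move=> inj; have k0 : lker (linfun f) == 0%VS.
  by apply/lker0P => x y; rewrite !lfunE; apply: inj.
rewrite -(@limg_dim_eq _ _ _ (linfun f) fullv); last by rewrite (eqP k0) capv0.
exact/dimvS/subvf.
Qed.

Lemma lin_bij (f : {linear vT -> wT}) : injective f ->
  \dim {:vT} = \dim {:wT} -> bijective f.
Proof.
move=> inj hd; have k0 : lker (linfun f) == 0%VS.
  by apply/lker0P => x y; rewrite !lfunE; apply: inj.
have limgT : limg (linfun f) = fullv.
  apply/eqP; rewrite eqEdim subvf /= limg_dim_eq ?hd //.
  by rewrite (eqP k0) capv0.
exists ((linfun f)^-1)%VF => x.
  by rewrite -[f x](lfunE f) lker0_lfunK.
by rewrite -[f _](lfunE f) limg_lfunVK // limgT memvf.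
Qed.

Lemma lin_bij_dim (f : {linear vT -> wT}) : bijective f ->
  \dim {:vT} = \dim {:wT}.
Proof.
move=> [g fg gf]; have k0 : lker (linfun f) == 0%VS.
  by apply/lker0P => x y; rewrite !lfunE => /(congr1 g); rewrite !fg.
have limgT : limg (linfun f) = fullv.
  apply/eqP; rewrite eq_sym eqEdim dimvS ?subvf // andbT.
  apply/subvP => y _; rewrite -[y]gf -(lfunE f); exact/memv_img/memvf.

by rewrite -limgT limg_dim_eq // (eqP k0) capv0.
Qed.
End Lin.


Section P.
Set Implicit Arguments. Unset Strict Implicit.
Variable K : fieldType.
Implicit Types (p q r s h : {poly K}).

Lemma mkmE h : h \is monic -> (1 < size h)%N -> mk_monic h = h.
Proof. by move=> hm hs; rewrite /mk_monic hs hm. Qed.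

Lemma in_qpoly_eq0 h p : h \is monic -> (1 < size h)%N ->
  (in_qpoly h p == 0) = (h %| p).
Proof.
move=> hm hs; rewrite -(inj_eq val_inj) /= mkmE //.
by rewrite -Pdiv.IdomainMonic.modpE // -/(dvdp _ _).
Qed.

Lemma in_qpoly_val h (q : {poly %/ h}) : in_qpoly h (val q) = q.
Proof. by apply: val_inj => /=; apply: Pdiv.Ring.rmodp_small; exact: size_mk_monic. Qed.

Lemma in_qpoly_sum h p :
  in_qpoly h p = \sum_(i < size p) p`_i *: (in_qpoly h 'X) ^+ i.
Proof.
rewrite -{1}[p]coefK poly_def linear_sum; apply: eq_bigr => i _.
by rewrite linearZ rmorphXn.
Qed.

Lemma univ h1 h2 (f : {lrmorphism {poly %/ h1} -> {poly %/ h2}}) p :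
  f (in_qpoly h1 p) = in_qpoly h2 (p \Po val (f (in_qpoly h1 'X))).
Proof.
rewrite in_qpoly_sum comp_polyE !linear_sum; apply: eq_bigr => i _.
rewrite !linearZ /= !rmorphXn; congr (_ *: _ ^+ _); symmetry; apply: in_qpoly_val.
Qed.

Lemma coprime_comp a b h s : coprimep a b -> h %| a \Po s -> h %| b \Po s ->
  (size h <= 1)%N.
Proof.
move=> /Bezout_coprimepP [[u v] /=]; rewrite -size_poly_eq1 => /size_poly1P [c c0 e] ha hb.
have : h %| (u * a + v * b) \Po s.
  by rewrite comp_polyD !comp_polyM dvdp_add // dvdp_mull.
rewrite e comp_polyC => /dvdp_leq; rewrite polyC_eq0 size_polyC c0; exact.
Qed.

Lemma irr_dvd_exp Q p k : irreducible_poly Q -> Q %| p ^+ k -> Q %| p.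
Proof.
move=> irr; elim: k => [|k IH].
  rewrite expr0 dvdp1 => /eqP e; have := irr.1; by rewrite e.
rewrite exprS; case: (boolP (Q %| p)) => // nd.
rewrite Gauss_dvdpr ?irreducible_poly_coprime //; move/IH; by rewrite (negPf nd).
Qed.

Lemma taylor2 p r t : exists g,
  p \Po (r + t) = p \Po r + t * (p^`() \Po r) + t ^+ 2 * g.
Proof.
elim/poly_ind: p => [|p c [g IH]].
  by exists 0; rewrite deriv0 !comp_poly0 !mulr0 !addr0.
exists (p^`() \Po r + g * (r + t)).
rewrite derivMXaddC !comp_poly_MXaddC comp_polyD comp_polyM comp_polyX IH.
ring.
Qed.

End P.


Section M.
Set Implicit Arguments. Unset Strict Implicit.
Variable K : fieldType.
Variables h1 h2 s : {poly K}.
Hypotheses (m1 : h1 \is monic) (m2 : h2 \is monic)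
  (z1 : (1 < size h1)%N) (z2 : (1 < size h2)%N) (hd : h2 %| h1 \Po s).

Definition phi (q : {poly %/ h1}) : {poly %/ h2} := in_qpoly h2 (val q \Po s).

Lemma phi_in p : phi (in_qpoly h1 p) = in_qpoly h2 (p \Po s).
Proof.
rewrite /phi /= mkmE // -Pdiv.IdomainMonic.modpE //.
rewrite {2}(divp_eq p h1) comp_polyD comp_polyM in_qpolyD in_qpolyM.
have /eqP -> : in_qpoly h2 (h1 \Po s) == 0 by rewrite in_qpoly_eq0.
by rewrite mulr0 add0r.
Qed.

Lemma phi_lin : linear phi.
Proof.
move=> a x y; rewrite /phi.
have -> : val (a *: x + y) = a *: val x + val y by [].
by rewrite comp_polyD comp_polyZ in_qpolyD in_qpolyZ.
Qed.

Lemma phi_mm : monoid_morphism phi.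
Proof.
split.
  rewrite -(in_qpoly1 h1) phi_in comp_polyC; exact: in_qpoly1.
move=> x y; rewrite -[x * y]/(in_qpoly h1 (val x * val y)) phi_in comp_polyM.
by rewrite in_qpolyM.
Qed.

Lemma phi_ex : exists f : {lrmorphism {poly %/ h1} -> {poly %/ h2}}, f =1 phi.
Proof.
pose f1 : {lrmorphism {poly %/ h1} -> {poly %/ h2}} := HB.pack phi (GRing.isSemilinear.Build K _ _ _ phi (GRing.semilinear_linear phi_lin))
   (GRing.isMonoidMorphism.Build _ _ phi phi_mm).
by exists f1.
Qed.
End M.


Section C.
Set Implicit Arguments. Unset Strict Implicit.
Variable K : fieldType.
Implicit Types (p r s h u w Q : {poly K}).

Lemma size_gt1_exp Q k : (1 < size Q)%N -> (0 < k)%N -> (1 < size (Q ^+ k))%N.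
Proof.
move=> hQ hk; have Q0 : Q != 0 by rewrite -size_poly_gt0 ltnW.
have s0 : (0 < size (Q ^+ k))%N by rewrite size_poly_gt0 expf_neq0.
rewrite -(prednK s0) ltnS size_exp muln_gt0 hk andbT.
by case: (size Q) hQ => [|[|m]].
Qed.

Lemma dim_q h : h \is monic -> (1 < size h)%N -> \dim {:{poly %/ h}} = (size h).-1.
Proof. by move=> hm hs; rewrite dim_polyn mkmE. Qed.

Lemma val_small h (q : {poly %/ h}) : h \is monic -> (1 < size h)%N -> h %| val q -> val q = 0.
Proof.
move=> hm hs dv; apply/eqP; apply: contraT => q0.
have sz : (size (val q) < size h)%N.
  by apply: (leq_trans (size_mk_monic q)); rewrite mkmE.
by move: sz; rewrite ltnNge dvdp_leq.
Qed.

Lemma ker_field (Q1 h2 s : {poly K}) (q : {poly %/ Q1}) : Q1 \is monic -> irreducible_poly Q1 ->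
  (1 < size h2)%N -> h2 %| Q1 \Po s -> h2 %| val q \Po s -> q = 0.
Proof.
move=> m1 irr z2 d1 d2; apply: val_inj => /=.
apply/eqP; apply: contraT => q0.
have : coprimep Q1 (val q).
  rewrite irreducible_poly_coprime //; apply/negP => dv.
  by move: q0; rewrite (@val_small _ q m1 irr.1 dv) eqxx.
move/coprime_comp => /(_ _ _ d1 d2); by rewrite leqNgt z2.
Qed.

Lemma claim (Q1 Q2 s u : {poly K}) : irreducible_poly Q1 -> irreducible_poly Q2 ->
  Q1 \Po s = Q2 * u -> ~~ (Q2 %| u) ->
  forall j p, Q2 ^+ j %| p \Po s -> Q1 ^+ j %| p.
Proof.
move=> i1 i2 e nu; elim=> [|j IH] p;  first by move=> _; rewrite expr0 dvd1p.
move=> dj; have : Q2 ^+ j %| p \Po s by apply: dvdp_trans dj; rewrite dvdp_exp2l.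
move=> /IH dp; have pE := divpK dp; set w := p %/ Q1 ^+ j in pE.
have Q20 : Q2 != 0 by apply: irredp_neq0.
have : Q2 %| u ^+ j * (w \Po s).
  rewrite -(@dvdp_mul2l _ (Q2 ^+ j)) ?expf_neq0 //.
  rewrite -exprSr; move: dj; rewrite -pE comp_polyM rmorphXn /= e.
  by rewrite exprMn mulrC mulrA.
rewrite Gauss_dvdpr; last by rewrite coprimep_expr // irreducible_poly_coprime.
move=> dw; have : Q1 %| w.
  apply: contraT => nw.
  have := @coprime_comp _ Q1 w Q2 s; rewrite irreducible_poly_coprime // nw => /(_ isT).
  by rewrite e dvdp_mulIl dw => /(_ isT isT); rewrite leqNgt i2.1.
by move=> dw1; rewrite -pE exprS; apply: dvdp_mul.
Qed.

End C.


Section D.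
Set Implicit Arguments. Unset Strict Implicit.
Variable K : fieldType.
Implicit Types (p r s h u w Q : {poly K}).

Lemma dimk Q k : Q \is monic -> (1 < size Q)%N -> (0 < k)%N ->
  \dim {:{poly %/ Q ^+ k}} = ((size Q).-1 * k)%N.
Proof.
move=> m z k0; rewrite dim_q ?monic_exp ?size_gt1_exp //; exact: size_exp.
Qed.

Lemma choose_s (Q1 Q2 r : {poly K}) : irreducible_poly Q2 -> Q2 %| Q1 \Po r ->
  ~~ (Q2 %| Q1^`() \Po r) ->
  exists s u, Q1 \Po s = Q2 * u /\ ~~ (Q2 %| u).
Proof.
move=> i2 d nd; have Q20 : Q2 != 0 by apply: irredp_neq0.
have [d2|nd2] := boolP (Q2 ^+ 2 %| Q1 \Po r).
  have [g e] := @taylor2 _ Q1 r Q2.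
  have ds : Q2 %| Q1 \Po (r + Q2).
    by rewrite e !dvdp_add // ?dvdp_mulIl // exprS -mulrA dvdp_mulIl.
  exists (r + Q2), ((Q1 \Po (r + Q2)) %/ Q2); split; first by rewrite divpKC.
  apply/negP => du; move: nd; apply/negP/negPn.
  rewrite -(@dvdp_mul2l _ Q2) // -expr2.
  have : Q2 ^+ 2 %| Q1 \Po (r + Q2).
    by rewrite expr2 -(divpKC ds) dvdp_mul.
  by rewrite e -addrA dvdp_addr // dvdp_addl // dvdp_mulIl.
exists r, ((Q1 \Po r) %/ Q2); split; first by rewrite divpKC.
apply/negP => du; move: nd2; apply/negP/negPn.
by rewrite expr2 -(divpKC d) dvdp_mul.
Qed.

End D.


Section E.
Set Implicit Arguments. Unset Strict Implicit.
Variable K : fieldType.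

Lemma core (Q1 Q2 : {poly K}) k :
  Q1 \is monic -> Q2 \is monic ->
  irreducible_poly Q1 -> irreducible_poly Q2 ->
  Q1^`() != 0 -> Q2^`() != 0 -> (0 < k)%N ->
  kalg_iso ({poly %/ Q1 ^+ k} : lalgType K) ({poly %/ Q2 ^+ k} : lalgType K)
  <-> kalg_iso ({poly %/ Q1} : lalgType K) ({poly %/ Q2} : lalgType K).
Proof.
move=> m1 m2 i1 i2 D1 D2 k0.
have z1 := i1.1; have z2 := i2.1.
have Q20 : Q2 != 0 by apply: irredp_neq0.
have m1k := monic_exp k m1; have m2k := monic_exp k m2.
have z1k := size_gt1_exp z1 k0; have z2k := size_gt1_exp z2 k0.
split.
- move=> [F Fb].
  set s := val (F (in_qpoly (Q1 ^+ k) 'X)).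
  have hs : Q2 %| Q1 \Po s.
    have := univ F (Q1 ^+ k); rewrite -/s.
    have /eqP -> : in_qpoly (Q1 ^+ k) (Q1 ^+ k) == 0 by rewrite in_qpoly_eq0.
    rewrite raddf0 => /esym/eqP; rewrite in_qpoly_eq0 // rmorphXn /= => dk.
    apply: (irr_dvd_exp (k := k)) => //; apply: dvdp_trans dk.
    by rewrite dvdp_exp.
  have hdim : (size Q1).-1 = (size Q2).-1.
    have := lin_bij_dim Fb; rewrite !dimk // => /eqP.
    by rewrite eqn_pmul2r // => /eqP.
  have [f fE] := phi_ex m1 m2 z1 z2 hs.
  exists f; apply: lin_bij; last by rewrite (dim_q m1 z1) (dim_q m2 z2) hdim.
  move=> x y e; apply/eqP; rewrite -subr_eq0; apply/eqP.
  apply: (ker_field (s := s) m1 i1 z2 hs).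
  rewrite -in_qpoly_eq0 //; apply/eqP.
  by rewrite -[LHS]/(phi Q2 s (x - y)) -fE raddfB /= e subrr.
- move=> [F Fb].
  have Finj := bij_inj Fb.
  set r := val (F (in_qpoly Q1 'X)).
  have hr : Q2 %| Q1 \Po r.
    have := univ F Q1; rewrite -/r.
    have /eqP -> : in_qpoly Q1 Q1 == 0 by rewrite in_qpoly_eq0.
    by rewrite raddf0 => /esym/eqP; rewrite in_qpoly_eq0.
  have nd : ~~ (Q2 %| Q1^`() \Po r).
    apply/negP; rewrite -in_qpoly_eq0 // -/r -univ => /eqP.
    rewrite -(raddf0 F) => /Finj /eqP; rewrite in_qpoly_eq0 // => /(dvdp_leq D1).
    by rewrite leqNgt lt_size_deriv ?irredp_neq0.
  have hdim : (size Q1).-1 = (size Q2).-1.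
    by have := lin_bij_dim Fb; rewrite !dim_q.
  have [s [u [e nu]]] := choose_s i2 hr nd.
  have hs : Q2 ^+ k %| Q1 ^+ k \Po s.
    by rewrite rmorphXn /= e exprMn dvdp_mulIl.
  have [f fE] := phi_ex m1k m2k z1k z2k hs.
  exists f; apply: lin_bij; last by rewrite !dimk // hdim.
  move=> x y ex; apply/eqP; rewrite -subr_eq0; apply/eqP.
  have vz : val (x - y) = 0.
    apply: (val_small m1k z1k); apply: (claim i1 i2 e nu).
    rewrite -in_qpoly_eq0 //; apply/eqP.
    by rewrite -[LHS]/(phi (Q2 ^+ k) s (x - y)) -fE raddfB /= ex subrr.
  by apply: val_inj; rewrite vz.
Qed.

End E.

Section F.
Set Implicit Arguments. Unset Strict Implicit.
Variable K : fieldType.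

Lemma normQ (P : {poly K}) : irreducible_poly P -> P^`() != 0 ->
  [/\ (lead_coef P)^-1 *: P \is monic, irreducible_poly ((lead_coef P)^-1 *: P),
      ((lead_coef P)^-1 *: P)^`() != 0 &
      forall k, (lead_coef (P ^+ k))^-1 *: P ^+ k = ((lead_coef P)^-1 *: P) ^+ k].
Proof.
move=> irr D; have P0 := irredp_neq0 irr.
have l0 : lead_coef P != 0 by rewrite lead_coef_eq0.
have c0 : (lead_coef P)^-1 != 0 by rewrite invr_eq0.
split.
- by rewrite monicE lead_coefZ mulVf.
- split; first by rewrite size_scale // irr.1.
  move=> q sq dq; have eP := eqp_scale P c0.
  rewrite (eqp_dvdr _ eP) in dq.
  by apply: (eqp_trans (irr q sq dq)); rewrite eqp_sym.
- by rewrite derivZ scaler_eq0 negb_or c0.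
- by move=> k; rewrite exprZn lead_coef_exp exprVn.
Qed.
End F.

Theorem mainTheorem7 (K : fieldType) (P1 P2 : {poly K}) (k : nat) :
  irreducible_poly P1 -> irreducible_poly P2 ->
  P1^`() != 0 -> P2^`() != 0 -> (1 <= k)%N ->
  kalg_iso (quot_alg (P1 ^+ k) : lalgType K) (quot_alg (P2 ^+ k) : lalgType K)
  <-> kalg_iso (quot_alg P1 : lalgType K) (quot_alg P2 : lalgType K).
Proof.
move=> i1 i2 D1 D2 k0.
have [m1 j1 E1 e1] := normQ i1 D1.
have [m2 j2 E2 e2] := normQ i2 D2.
rewrite /quot_alg e1 e2.
exact: core.
Qed.
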